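(* Let $P,Q$ be plane posets with the same number $n$ of elements, and let $\theta_{P,Q}:P\to Q$ be the unique bijection which is increasing for the total orders $\leq$ of $P$ and $Q$. The following assertions are equivalent: (1) for all $x,y\in P$, if $\theta_{P,Q}(x)\leq_h\theta_{P,Q}(y)$ in $Q$ then $x\leq_h y$ in $P$; (2) for all $x,y\in P$, if $x\leq_r y$ in $P$ then $\theta_{P,Q}(x)\leq_r\theta_{P,Q}(y)$ in $Q$.
   Context: A plane poset is a finite set $P$ with two partial orders $\leq_h$ and $\leq_r$ such that for all $x\neq y$ in $P$, $x$ and $y$ are comparable for $\leq_h$ if and only if they are not comparable for $\leq_r$. It is known that on any plane poset the relation $x\leq y$ iff ($x\leq_h y$ or $x\leq_r y$) is a total order. *)

(* Defs.v *)
From mathcomp Require Import all_boot.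
Set Implicit Arguments. Unset Strict Implicit. Unset Printing Implicit Defensive.

Definition partial_order (T : Type) (le : rel T) : Prop :=
  [/\ reflexive le, antisymmetric le & transitive le].

Definition plane_poset (T : finType) (leh ler : rel T) : Prop :=
  [/\ partial_order leh, partial_order ler &
      forall x y : T, x != y ->
        ((leh x y || leh y x) <-> ~~ (ler x y || ler y x))].

Definition plane_total (T : Type) (leh ler : rel T) : rel T :=
  fun x y => leh x y || ler x y.

(* Main.v *)
Require Import Defs.
From mathcomp Require Import all_boot.

Lemma pp_excl {T : finType} {leh ler : rel T} : plane_poset leh ler ->
  forall x y, x != y -> (leh x y || leh y x) -> (ler x y || ler y x) -> False.
Proof.
case=> _ _ H x y nxy h r. have := (proj1 (H x y nxy) h). by rewrite r.
Qed.

Theorem lemma9 (T U : finType) (lehP lerP : rel T) (lehQ lerQ : rel U)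
  (HP : plane_poset lehP lerP) (HQ : plane_poset lehQ lerQ)
  (Hcard : #|T| = #|U|)
  (theta : T -> U) (Hbij : bijective theta)
  (Hincr : {homo theta : x y / plane_total lehP lerP x y >-> plane_total lehQ lerQ x y}) :
  (forall x y : T, lehQ (theta x) (theta y) -> lehP x y) <->
  (forall x y : T, lerP x y -> lerQ (theta x) (theta y)).
Proof.
have inj := bij_inj Hbij.
have HP' := HP; have HQ' := HQ.
case: HP' => [[rhP ahP thP] [rrP arP trP] cP].
case: HQ' => [[rhQ ahQ thQ] [rrQ arQ trQ] cQ].
have neq : forall x y, x != y -> theta x != theta y.
  by move=> x y; apply: contra => /eqP /inj ->.
split.
- move=> H1 x y r.
  case: (eqVneq x y) => [->|nxy]; first exact: rrQ.
  have : plane_total lehQ lerQ (theta x) (theta y).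
    by apply: Hincr; rewrite /plane_total r orbT.
  case/orP => // h.
  exfalso; apply: (pp_excl HP x y nxy); [by rewrite (H1 _ _ h) | by rewrite r].
- move=> H2 x y h.
  case: (eqVneq x y) => [->|nxy]; first exact: rhP.
  have nq := neq _ _ nxy.
  case/boolP: (lerP x y || lerP y x) => [/orP [r|r]|nr].
  + exfalso; apply: (pp_excl HQ _ _ nq); first by rewrite h.
    by rewrite (H2 _ _ r).
  + exfalso; apply: (pp_excl HQ _ _ nq); first by rewrite h.
    by rewrite (H2 _ _ r) orbT.
  + have := proj2 (cP x y nxy) nr; case/orP => // h'.
    have : plane_total lehQ lerQ (theta y) (theta x).
      by apply: Hincr; rewrite /plane_total h'.
    case/orP => h2.
    * by move: nq; rewrite (ahQ _ _ (introT andP (conj h h2))) eqxx.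
    * exfalso; apply: (pp_excl HQ _ _ nq); first by rewrite h.
      by rewrite h2 orbT.
Qed.
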